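(* For all $\lambda$-terms $A,B$: (1) If $A\to_{\beta''}B$ then $A\twoheadrightarrow_{\beta'}B$. (2) If $A\to_{\beta'}B$ then $A\twoheadrightarrow_{\beta''}B$.
   Context: Let $\mathcal V$ be an infinite set of variables enumerated in a fixed order $x,y,z,x',y',z',\dots$. $\lambda$-terms: $\mathcal M ::= \mathcal V \mid (\lambda\mathcal V.\mathcal M)\mid(\mathcal M\mathcal M)$; $=_{\mathcal M}$ is syntactic identity. $FV(C)$ is the set of variables with a free occurrence in $C$; $BV(C)$ the set of $v$ with $\lambda v$ occurring in $C$; $FV(vA)=\{v\}\cup FV(A)$, $FV(AB)=FV(A)\cup FV(B)$. A term $C$ is clean iff $BV(C)\cap FV(C)=\emptyset$ and each $\lambda v$ occurs at most once in $C$. Grafting $A\{v:=B\}$: $v\{v:=B\}=B$; $v'\{v:=B\}=v'$ if $v'\neq v$; $(AC)\{v:=B\}=A\{v:=B\}C\{v:=B\}$; $(\lambda v.A)\{v:=B\}=\lambda v.A$; $(\lambda v'.A)\{v:=B\}=\lambda v'.A\{v:=B\}$ if $v\neq v'$. Replacement $A\langle\langle v:=B\rangle\rangle$: $v\langle\langle v:=B\rangle\rangle=B$; $v'\langle\langle v:=B\rangle\rangle=v'$ if $v\neq v'$; $(AC)\langle\langle v:=B\rangle\rangle=A\langle\langle v:=B\rangle\rangle C\langle\langle v:=B\rangle\rangle$; $(\lambda v.A)\langle\langle v:=B\rangle\rangle=\lambda v.A$; $(\lambda v'.A)\langle\langle v:=B\rangle\rangle=\lambda v'.A\langle\langle v:=B\rangle\rangle$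 if $v\neq v'$ and ($v'\notin FV(B)$ or $v\notin FV(A)$); $(\lambda v'.A)\langle\langle v:=B\rangle\rangle=\lambda v''.A\langle\langle v':=v''\rangle\rangle\langle\langle v:=B\rangle\rangle$ if $v\neq v'$, $v'\in FV(B)$, $v\in FV(A)$, with $v''$ the first variable in the ordered list such that $v''\notin FV(AB)$. A relation is compatible if $A\,R\,B$ implies $(AC)R(BC)$, $(CA)R(CB)$, $(\lambda u.A)R(\lambda u.B)$. $\to_\alpha$: least compatible relation with $\lambda v.A\to_\alpha\lambda v'.A\langle\langle v:=v'\rangle\rangle$ for $v'\notin FV(A)$. $\to_{\alpha'}$: least compatible relation with $\lambda v.A\to_{\alpha'}\lambda v'.A\{v:=v'\}$ for $v'\notin FV(vA)$, $v,v'\notin BV(A)$; $\twoheadrightarrow_{\alpha'}$ its reflexive transitive closure. $\to_{\beta'}$: least compatible relation with $(\lambda v.A)B\to_{\beta'}A\langle\langle v:=B\rangle\rangle$; $\twoheadrightarrow_{\beta'}$ is the reflexive transitive closure of $\to_{\beta'}\cup\to_\alpha$. $\to_{\beta''}$: least compatible relation with $(\lambda v.A)B\to_{\beta''}A'\{v':=B'\}$ whenever $(\lambda v.A)B\twoheadrightarrow_{\alpha'}(\lambda v'.A')B'$ and $(\lambda v'.A')B'$ is clean; $\twoheadrightarrow_{\beta''}$ is the reflexive transitive closure of $\to_{\beta''}\cup\to_{\alpha'}$. *)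

(* Defs.v *)
From Stdlib Require Import List Arith Bool Relations.
Import ListNotations.

Definition var := nat.

Inductive term : Type :=
| Var : var -> term
| Lam : var -> term -> term
| App : term -> term -> term.

Fixpoint FV (t : term) : list var :=
  match t with
  | Var x => [x]
  | Lam x A => filter (fun y => negb (Nat.eqb y x)) (FV A)
  | App A B => FV A ++ FV B
  end.

(* binder occurrences, with multiplicity: BV(C) is the set of its elements *)
Fixpoint binders (t : term) : list var :=
  match t with
  | Var _ => []
  | Lam x A => x :: binders A
  | App A B => binders A ++ binders B
  end.

Definition BV (t : term) : list var := binders t.

Definition memb (x : var) (l : list var) : bool := existsb (Nat.eqb x) l.

Definition clean (C : term) : Prop :=
  (forall v, In v (BV C) -> ~ In v (FV C)) /\ NoDup (binders C).

Fixpoint search (k n : nat) (l : list var) : var :=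
  match k with
  | 0 => n
  | S k => if memb n l then search k (S n) l else n
  end.
Definition fresh (l : list var) : var := search (S (length l)) 0 l.

Fixpoint graft (A : term) (v : var) (B : term) : term :=
  match A with
  | Var x => if Nat.eqb x v then B else Var x
  | App A1 A2 => App (graft A1 v B) (graft A2 v B)
  | Lam x A1 => if Nat.eqb x v then Lam x A1 else Lam x (graft A1 v B)
  end.

Fixpoint size (t : term) : nat :=
  match t with
  | Var _ => 1
  | Lam _ A => S (size A)
  | App A B => S (size A + size B)
  end.

(* replacement A<<v:=B>>, by recursion on a fuel bounded below by size A
   (renaming a bound variable does not change the size, so fuel = size A
   always suffices) *)
Fixpoint repf (n : nat) (A : term) (v : var) (B : term) : term :=
  match n with
  | 0 => A
  | S n =>
    match A with
    | Var x => if Nat.eqb x v then B else Var x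
    | App A1 A2 => App (repf n A1 v B) (repf n A2 v B)
    | Lam x A1 =>
      if Nat.eqb v x then Lam x A1
      else if memb x (FV B) && memb v (FV A1) then
        let x' := fresh (FV (App A1 B)) in
        Lam x' (repf n (repf n A1 x (Var x')) v B)
      else Lam x (repf n A1 v B)
    end
  end.

Definition rep (A : term) (v : var) (B : term) : term := repf (size A) A v B.

Inductive compat (R : term -> term -> Prop) : term -> term -> Prop :=
| c_base : forall A B, R A B -> compat R A B
| c_appl : forall A B C, compat R A B -> compat R (App A C) (App B C)
| c_appr : forall A B C, compat R A B -> compat R (App C A) (App C B)
| c_lam  : forall u A B, compat R A B -> compat R (Lam u A) (Lam u B).

Inductive alpha_base : term -> term -> Prop :=
| ab : forall v v' A, ~ In v' (FV A) ->
    alpha_base (Lam v A) (Lam v' (rep A v (Var v'))).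
Definition alpha := compat alpha_base.

(* FV(vA) = {v} ∪ FV(A) *)
Inductive alpha'_base : term -> term -> Prop :=
| a'b : forall v v' A, ~ In v' (v :: FV A) ->
    ~ In v (BV A) -> ~ In v' (BV A) ->
    alpha'_base (Lam v A) (Lam v' (graft A v (Var v'))).
Definition alpha' := compat alpha'_base.
Definition alpha'_star := clos_refl_trans term alpha'.

Inductive beta'_base : term -> term -> Prop :=
| b'b : forall v A B, beta'_base (App (Lam v A) B) (rep A v B).
Definition beta' := compat beta'_base.
Definition beta'_star := clos_refl_trans term (union term beta' alpha).

Inductive beta''_base : term -> term -> Prop :=
| b''b : forall v A B v' A' B',
    alpha'_star (App (Lam v A) B) (App (Lam v' A') B') ->
    clean (App (Lam v' A') B') ->
    beta''_base (App (Lam v A) B) (graft A' v' B').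
Definition beta'' := compat beta''_base.
Definition beta''_star := clos_refl_trans term (union term beta'' alpha').

(* Main.v *)
Require Import Defs.
From Stdlib Require Import List Arith Bool Relations Lia.
Import ListNotations.

Lemma memb_In x l : memb x l = true <-> In x l.
Proof.
  unfold memb. rewrite existsb_exists. split.
  - intros [y [H1 H2]]. apply Nat.eqb_eq in H2. subst; auto.
  - intros H. exists x. split; auto. apply Nat.eqb_refl.
Qed.

Lemma memb_false x l : memb x l = false <-> ~ In x l.
Proof.
  rewrite <- memb_In. destruct (memb x l); split; intro H; try discriminate; auto.
  exfalso; auto.
Qed.

Lemma FV_Lam y x A : In y (FV (Lam x A)) <-> In y (FV A) /\ y <> x.
Proof.
  simpl. rewrite filter_In, negb_true_iff, Nat.eqb_neq. tauto.
Qed.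

Lemma FV_Lam' y x A : In y (filter (fun y0 => negb (Nat.eqb y0 x)) (FV A)) <-> In y (FV A) /\ y <> x.
Proof. apply FV_Lam. Qed.

Lemma search_spec l : forall k n, (exists m, n <= m < n + k /\ ~ In m l) ->
  ~ In (search k n l) l.
Proof.
  induction k; intros n [m [Hm Hn]]; simpl. lia.
  destruct (memb n l) eqn:E.
  - apply IHk. exists m. apply memb_In in E. split; [|auto].
    assert (m <> n) by (intro; subst; auto). lia.
  - apply memb_false; auto.
Qed.

Lemma ex_notin l : forall k, (forall m, m < k -> In m l) \/ exists m, m < k /\ ~ In m l.
Proof.
  induction k. left; lia.
  destruct IHk as [H|[m [H1 H2]]].
  - destruct (in_dec Nat.eq_dec k l).
    + left; intros m Hm. destruct (Nat.eq_dec m k); subst; auto. apply H; lia.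
    + right; exists k; auto.
  - right; exists m; split; auto; lia.
Qed.

Lemma fresh_spec l : ~ In (fresh l) l.
Proof.
  unfold fresh. apply search_spec.
  destruct (ex_notin l (S (length l))) as [H|[m [H1 H2]]].
  - exfalso. assert (Hi : incl (seq 0 (S (length l))) l).
    { intros m Hm. apply in_seq in Hm. apply H; lia. }
    apply NoDup_incl_length in Hi; [rewrite length_seq in Hi; exact (Nat.nle_succ_diag_l _ Hi) | apply seq_NoDup].
  - exists m. split; [lia|auto].
Qed.

Inductive dterm := DF (x : var) | DB (i : nat) | DL (t : dterm) | DA (t u : dterm).

Fixpoint lift (c : nat) (t : dterm) : dterm :=
  match t with
  | DF x => DF x
  | DB i => if i <? c then DB i else DB (S i)
  | DL t => DL (lift (S c) t)
  | DA t u => DA (lift c t) (lift c u)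
  end.

Lemma lift_lift t : forall k c, k <= c -> lift k (lift c t) = lift (S c) (lift k t).
Proof.
  induction t; intros k c Hk; simpl; auto.
  - destruct (Nat.ltb_spec i c); destruct (Nat.ltb_spec i k); simpl;
    repeat match goal with |- context [?a <? ?b] => destruct (Nat.ltb_spec a b) end;
    try reflexivity; exfalso; lia.
  - f_equal. apply IHt. lia.
  - f_equal; auto.
Qed.

Definition upd (r : var -> dterm) v s := fun y => if Nat.eqb y v then s else r y.
Definition ext (r : var -> dterm) x := fun y => if Nat.eqb y x then DB 0 else lift 0 (r y).

Fixpoint conv (r : var -> dterm) (t : term) : dterm :=
  match t with
  | Var x => r x
  | Lam x A => DL (conv (ext r x) A)
  | App A B => DA (conv r A) (conv r B)
  end.

Lemma conv_fv A : forall r r', (forall y, In y (FV A) -> r y = r' y) -> conv r A = conv r' A.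
Proof.
  induction A; intros r r' H; simpl.
  - apply H; simpl; auto.
  - f_equal. apply IHA. intros y Hy. unfold ext. destruct (Nat.eqb_spec y v); auto.
    f_equal. apply H. apply FV_Lam; auto.
  - f_equal; [apply IHA1|apply IHA2]; intros; apply H; simpl; apply in_or_app; auto.
Qed.

Lemma conv_lift B : forall r r' c, (forall y, In y (FV B) -> r' y = lift c (r y)) ->
  conv r' B = lift c (conv r B).
Proof.
  induction B; intros r r' c H; simpl.
  - apply H; simpl; auto.
  - f_equal. apply IHB. intros z Hz. unfold ext. destruct (Nat.eqb_spec z v).
    + reflexivity.
    + rewrite H by (apply FV_Lam; auto). apply lift_lift. lia.
  - f_equal; [apply IHB1|apply IHB2]; intros; apply H; simpl; apply in_or_app; auto.
Qed.

Lemma conv_ext_nf r x B : ~ In x (FV B) -> conv (ext r x) B = lift 0 (conv r B).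
Proof.
  intro Hx. apply conv_lift. intros y Hy. unfold ext.
  destruct (Nat.eqb_spec y x); subst; [contradiction|reflexivity].
Qed.

Lemma size_repf_var n : forall A v w, size (repf n A v (Var w)) = size A.
Proof.
  induction n; simpl; auto. intros [x|x A1|A1 A2] v w; simpl.
  - destruct (Nat.eqb x v); auto.
  - destruct (v =? x); simpl; auto. destruct (_ && _); simpl; rewrite ?IHn; auto.
  - rewrite !IHn; auto.
Qed.

Ltac eqbs := repeat match goal with |- context [Nat.eqb ?a ?b] => destruct (Nat.eqb_spec a b) end.

Lemma REP n : forall A v B r, size A <= n ->
  conv r (repf n A v B) = conv (upd r v (conv r B)) A.
Proof.
  induction n; intros A v B r H.
  { destruct A; simpl in H; lia. }
  destruct A as [x|x A1|A1 A2]; simpl.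
  - unfold upd. destruct (Nat.eqb x v); auto.
  - destruct (Nat.eqb_spec v x).
    + subst. simpl. f_equal. apply conv_fv. intros y _. unfold ext, upd. eqbs; auto.
    + destruct (memb x (FV B) && memb v (FV A1)) eqn:E.
      * apply andb_true_iff in E; destruct E as [E1 E2]; rewrite memb_In in E1, E2.
        assert (Hx' := fresh_spec (FV (App A1 B))).
        set (x' := fresh (FV (App A1 B))) in *. simpl in Hx'.
        simpl. f_equal.
        rewrite IHn by (rewrite size_repf_var; simpl in H; lia).
        rewrite IHn by (simpl in H; lia).
        rewrite conv_ext_nf by (intro; apply Hx'; apply in_or_app; auto).
        apply conv_fv. intros y Hy. simpl. unfold upd, ext. eqbs; subst; auto; try congruence.
        all: exfalso; apply Hx'; apply in_or_app; auto.
      * simpl. f_equal. rewrite IHn by (simpl in H; lia).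
        apply conv_fv. intros y Hy. unfold upd, ext. eqbs; subst; auto; try congruence.
        apply (conv_ext_nf r x B). intro Hb.
        rewrite <- memb_In in Hb, Hy. rewrite Hb, Hy in E. discriminate.
  - simpl in H. f_equal; apply IHn; lia.
Qed.

Lemma GRAFT A : forall v B r, (forall y, In y (binders A) -> ~ In y (FV B)) ->
  conv r (graft A v B) = conv (upd r v (conv r B)) A.
Proof.
  induction A as [x|x A1 IH|A1 IH1 A2 IH2]; intros v B r H; simpl.
  - unfold upd. destruct (Nat.eqb x v); auto.
  - destruct (Nat.eqb_spec x v).
    + subst. simpl. f_equal. apply conv_fv. intros y _. unfold ext, upd. eqbs; auto.
    + simpl. f_equal. rewrite IH by (intros; apply H; simpl; auto).
      rewrite conv_ext_nf by (apply H; simpl; auto).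
      apply conv_fv. intros y Hy. unfold upd, ext. eqbs; subst; auto; congruence.
  - f_equal; [apply IH1|apply IH2]; intros; apply H; simpl; apply in_or_app; auto.
Qed.

Lemma RG n : forall A v B, size A <= n -> (forall y, In y (binders A) -> ~ In y (FV B)) ->
  repf n A v B = graft A v B.
Proof.
  induction n; intros [x|x A1|A1 A2] v B Hs H; simpl in *; try lia; auto.
  - destruct (Nat.eqb_spec v x).
    + subst. rewrite Nat.eqb_refl. auto.
    + destruct (Nat.eqb_spec x v); [congruence|].
      assert (E : memb x (FV B) = false) by (apply memb_false; apply H; auto).
      rewrite E. simpl. f_equal. apply IHn; [lia|]. intros; apply H; auto.
  - f_equal; apply IHn; try lia; intros; apply H; apply in_or_app; auto.
Qed.

Lemma size_graft_var A v w : size (graft A v (Var w)) = size A.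
Proof.
  induction A; simpl; auto.
  - destruct (v0 =? v); auto.
  - destruct (v0 =? v); simpl; auto.
Qed.

Lemma binders_graft_var A v w : binders (graft A v (Var w)) = binders A.
Proof.
  induction A; simpl; auto.
  - destruct (v0 =? v); auto.
  - destruct (v0 =? v); simpl; auto. f_equal; auto.
  - f_equal; auto.
Qed.

Lemma graft_nofree A : forall v B, ~ In v (FV A) -> graft A v B = A.
Proof.
  induction A; intros x B H; simpl.
  - destruct (Nat.eqb_spec v x); subst; auto. exfalso; apply H; simpl; auto.
  - destruct (Nat.eqb_spec v x); auto. f_equal. apply IHA.
    intro; apply H; apply FV_Lam; auto.
  - f_equal; [apply IHA1|apply IHA2]; intro; apply H; simpl; apply in_or_app; auto.
Qed.

Lemma graft_inv A : forall v v', ~ In v' (FV A) -> ~ In v' (binders A) -> v <> v' ->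
  graft (graft A v (Var v')) v' (Var v) = A.
Proof.
  induction A as [x|x A1 IH|A1 IH1 A2 IH2]; intros v v' H H0 Hne; simpl.
  - destruct (Nat.eqb_spec x v).
    + subst. simpl. rewrite Nat.eqb_refl. auto.
    + simpl. destruct (Nat.eqb_spec x v'); auto. subst; exfalso; apply H; simpl; auto.
  - destruct (Nat.eqb_spec x v).
    + subst. simpl. destruct (Nat.eqb_spec v v'); [contradiction|].
      f_equal. apply graft_nofree. intro; apply H; apply FV_Lam; auto.
    + simpl. destruct (Nat.eqb_spec x v').
      * subst; exfalso; apply H0; simpl; auto.
      * f_equal. apply IH; auto.
        intro; apply H; apply FV_Lam; split; auto.
        intro Hb; apply H0; simpl; auto.
  - simpl in H, H0. rewrite in_app_iff in H, H0.
    f_equal; [apply IH1|apply IH2]; auto.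
Qed.

Lemma FV_graft_var A : forall v w y, ~ In w (binders A) ->
  (In y (FV (graft A v (Var w))) <-> (In y (FV A) /\ y <> v) \/ (y = w /\ In v (FV A))).
Proof.
  induction A as [x|x A1 IH|A1 IH1 A2 IH2]; intros v w y H; simpl.
  - destruct (Nat.eqb_spec x v); simpl; subst; intuition; subst; intuition congruence.
  - destruct (Nat.eqb_spec x v).
    + subst. rewrite ?FV_Lam, ?FV_Lam'. split; intros; intuition.
    + simpl. rewrite ?FV_Lam, ?FV_Lam'. rewrite IH by (intro; apply H; simpl; auto).
      assert (w <> x) by (intro; subst; apply H; simpl; auto).
      split; intros; intuition; subst; intuition congruence.
  - rewrite !in_app_iff. rewrite IH1, IH2 by (intro; apply H; apply in_or_app; auto).
    intuition.
Qed.

Definition ctxc (S : term -> term -> Prop) :=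
  (forall a b c, S a b -> S (App a c) (App b c)) /\
  (forall a b c, S a b -> S (App c a) (App c b)) /\
  (forall u a b, S a b -> S (Lam u a) (Lam u b)).

Lemma ctxc_compat R : ctxc (compat R).
Proof. split; [|split]; intros; [apply c_appl|apply c_appr|apply c_lam]; auto. Qed.

Lemma ctxc_union S1 S2 : ctxc S1 -> ctxc S2 -> ctxc (union term S1 S2).
Proof.
  intros [a1 [b1 c1]] [a2 [b2 c2]]. unfold union.
  split; [|split]; intros; intuition.
Qed.

Lemma ctxc_rt S : ctxc S -> ctxc (clos_refl_trans term S).
Proof.
  intros [a1 [b1 c1]]. split; [|split].
  - intros a b c H; induction H; [apply rt_step; auto|apply rt_refl|eapply rt_trans; eauto].
  - intros a b c H; induction H; [apply rt_step; auto|apply rt_refl|eapply rt_trans; eauto].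
  - intros u a b H; induction H; [apply rt_step; auto|apply rt_refl|eapply rt_trans; eauto].
Qed.

Lemma ctxc_a'star : ctxc alpha'_star.
Proof. apply ctxc_rt, ctxc_compat. Qed.

Lemma star_appl a b c : alpha'_star a b -> alpha'_star (App a c) (App b c).
Proof. apply ctxc_a'star. Qed.
Lemma star_appr a b c : alpha'_star a b -> alpha'_star (App c a) (App c b).
Proof. apply ctxc_a'star. Qed.
Lemma star_lam u a b : alpha'_star a b -> alpha'_star (Lam u a) (Lam u b).
Proof. apply ctxc_a'star. Qed.

Lemma alpha'_sym T U : alpha' T U -> alpha' U T.
Proof.
  induction 1.
  - destruct H as [v v' A H0 H1 H2]. apply c_base.
    unfold BV in *.
    assert (Hv : v <> v') by (intro; subst; apply H0; simpl; auto).
    assert (Hf : ~ In v' (FV A)) by (intro; apply H0; simpl; auto).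
    replace (Lam v A) with (Lam v (graft (graft A v (Var v')) v' (Var v)))
      by (rewrite graft_inv; auto).
    constructor; unfold BV; rewrite ?binders_graft_var; auto.
    intros [E|E]; [congruence|].
    apply FV_graft_var in E; auto. intuition.
  - apply c_appl; auto.
  - apply c_appr; auto.
  - apply c_lam; auto.
Qed.

Lemma star_sym T U : alpha'_star T U -> alpha'_star U T.
Proof.
  induction 1; [apply rt_step, alpha'_sym; auto|apply rt_refl|eapply rt_trans; eauto].
Qed.

Lemma alpha'_inv T U : alpha' T U ->
  (forall r, conv r T = conv r U) /\ (forall y, In y (FV T) <-> In y (FV U)) /\ size T = size U.
Proof.
  induction 1.
  - destruct H as [v v' A H0 H1 H2]. unfold BV in *.
    assert (Hv : v <> v') by (intro; subst; apply H0; simpl; auto).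
    assert (Hf : ~ In v' (FV A)) by (intro; apply H0; simpl; auto).
    split; [|split].
    + intro r. simpl. f_equal.
      rewrite GRAFT by (intros y Hy [E|[]]; subst; contradiction).
      apply conv_fv. intros y Hy. simpl. unfold upd, ext. eqbs; subst; auto; congruence.
    + intro y. rewrite ?FV_Lam, ?FV_Lam', FV_graft_var by auto.
      split; intros; intuition; subst; auto.
    + simpl. rewrite size_graft_var. auto.
  - destruct IHcompat as [H1 [H2 H3]]. split; [|split]; simpl; auto.
    + intros; f_equal; auto.
    + intro y; rewrite !in_app_iff, H2; tauto.
  - destruct IHcompat as [H1 [H2 H3]]. split; [|split]; simpl; auto.
    + intros; f_equal; auto.
    + intro y; rewrite !in_app_iff, H2; tauto.
  - destruct IHcompat as [H1 [H2 H3]]. split; [|split]; simpl; auto.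
    + intros; f_equal; auto.
    + intro y; rewrite ?FV_Lam, ?FV_Lam', H2; tauto.
Qed.

Lemma star_inv T U : alpha'_star T U ->
  (forall r, conv r T = conv r U) /\ (forall y, In y (FV T) <-> In y (FV U)) /\ size T = size U.
Proof.
  induction 1.
  - apply alpha'_inv; auto.
  - split; [|split]; auto; tauto.
  - destruct IHclos_refl_trans1 as [a1 [b1 c1]], IHclos_refl_trans2 as [a2 [b2 c2]].
    split; [|split]; intros; [rewrite a1; auto|rewrite b1; auto|congruence].
Qed.

Lemma NoDup_app' (l1 l2 : list var) : NoDup l1 -> NoDup l2 ->
  (forall x, In x l1 -> ~ In x l2) -> NoDup (l1 ++ l2).
Proof.
  induction l1; simpl; intros H1 H2 H; auto.
  inversion H1; subst. constructor.
  - rewrite in_app_iff. intros [E|E]; [contradiction|]. apply (H a); auto.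
  - apply IHl1; auto.
Qed.

Lemma FRESHEN T : forall L, exists T', alpha'_star T T' /\ NoDup (binders T') /\
  (forall y, In y (binders T') -> ~ In y L).
Proof.
  induction T as [x|x A IH|A1 IH1 A2 IH2]; intros L.
  - exists (Var x). split; [apply rt_refl|split; simpl; auto]. constructor.
  - assert (Hw := fresh_spec (x :: FV A ++ L)).
    set (w := fresh (x :: FV A ++ L)) in *.
    destruct (IH (w :: x :: L)) as [A' [HA [Hnd Hav]]].
    destruct (star_inv _ _ HA) as [_ [Hfv _]].
    exists (Lam w (graft A' x (Var w))). split; [|split].
    + eapply rt_trans. apply star_lam. exact HA.
      apply rt_step. apply c_base. constructor; unfold BV.
      * intros [E|E]; apply Hw; [left; auto|right; apply in_or_app; left; apply Hfv; auto].
      * intro E; apply (Hav x E); simpl; auto.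
      * intro E; apply (Hav w E); simpl; auto.
    + simpl. rewrite binders_graft_var. constructor; auto.
      intro E; apply (Hav w E); simpl; auto.
    + simpl. rewrite binders_graft_var. intros y [E|E].
      * subst. intro; apply Hw; right; apply in_or_app; auto.
      * intro; apply (Hav y E); simpl; auto.
  - destruct (IH1 L) as [T1 [H1 [N1 V1]]].
    destruct (IH2 (L ++ binders T1)) as [T2 [H2 [N2 V2]]].
    exists (App T1 T2). split; [|split].
    + eapply rt_trans; [apply star_appl; exact H1|apply star_appr; exact H2].
    + simpl. apply NoDup_app'; auto. intros y Hy Hy'. apply (V2 y Hy'). apply in_or_app; auto.
    + simpl. intros y Hy. apply in_app_iff in Hy. destruct Hy as [Hy|Hy]; auto.
      intro; apply (V2 y Hy); apply in_or_app; auto.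
Qed.

Definition atomic (r : var -> dterm) := forall y, (exists z, r y = DF z) \/ (exists i, r y = DB i).
Definition injr (r : var -> dterm) := forall a b, r a = r b -> a = b.

Lemma atomic_ext r z : atomic r -> atomic (ext r z).
Proof.
  intros Ha y. unfold ext. destruct (y =? z). right; exists 0; auto.
  destruct (Ha y) as [[w E]|[i E]]; rewrite E; simpl; [left; exists w|right; exists (S i)]; auto.
Qed.

Lemma inj_ext r z : atomic r -> injr r -> injr (ext r z).
Proof.
  intros Ha Hi a b. unfold ext.
  destruct (Nat.eqb_spec a z), (Nat.eqb_spec b z); subst; auto; intro E.
  - destruct (Ha b) as [[w E']|[i E']]; rewrite E' in E; simpl in E; discriminate.
  - destruct (Ha a) as [[w E']|[i E']]; rewrite E' in E; simpl in E; discriminate.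
  - apply Hi.
    destruct (Ha a) as [[w E']|[i E']], (Ha b) as [[w' E'']|[i' E'']];
      rewrite E', E'' in *; simpl in E; congruence.
Qed.

Lemma size_pos T : 1 <= size T.
Proof. destruct T; simpl; lia. Qed.

Lemma ren_conv r x z A : ~ In z (FV A) ->
  conv (upd (ext r z) x (DB 0)) A = conv (ext r x) A.
Proof.
  intro Hz. apply conv_fv. intros y Hy. unfold upd, ext. eqbs; subst; auto; contradiction.
Qed.

Lemma lam_rename x A z : z <> x -> ~ In z (FV A) -> exists A',
  alpha'_star (Lam x A) (Lam z A') /\
  (forall r, conv (ext r z) A' = conv (ext r x) A) /\ size A' = size A.
Proof.
  intros Hzx HzA0.
  destruct (FRESHEN A [x; z]) as [A' [HA [_ Hav]]].
  destruct (star_inv _ _ HA) as [Hc [Hfv Hs]].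
  assert (HzA : ~ In z (FV A')) by (intro E; apply HzA0; apply Hfv; auto).
  exists (graft A' x (Var z)). split; [|split].
  - eapply rt_trans. apply star_lam. exact HA.
    apply rt_step. apply c_base. constructor; unfold BV.
    + intros [E|E]; [congruence|contradiction].
    + intro E; apply (Hav x E); simpl; auto.
    + intro E; apply (Hav z E); simpl; auto.
  - intro r. rewrite GRAFT.
    + simpl. unfold ext at 2. rewrite Nat.eqb_refl. rewrite ren_conv by auto. auto.
    + intros y Hy [E|[]]; apply (Hav y Hy); rewrite <- E; simpl; auto.
  - rewrite size_graft_var; auto.
Qed.

Lemma COMP n : forall T U r, size T <= n -> atomic r -> injr r -> conv r T = conv r U ->
  alpha'_star T U.
Proof.
  induction n; intros T U r Hs Ha Hi Hc.
  { pose proof (size_pos T); lia. }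
  destruct T as [x|x A|A1 A2], U as [y|y B|B1 B2]; simpl in Hc, Hs;
    try (destruct (Ha x) as [[w E]|[i E]]; rewrite E in Hc; discriminate);
    try (destruct (Ha y) as [[w E]|[i E]]; rewrite E in Hc; discriminate);
    try discriminate.
  - rewrite (Hi _ _ Hc); apply rt_refl.
  - injection Hc as Hc.
    assert (Hz := fresh_spec (x :: y :: FV A ++ FV B)).
    set (z := fresh (x :: y :: FV A ++ FV B)) in *.
    simpl in Hz. rewrite in_app_iff in Hz.
    destruct (lam_rename x A z) as [A' [HA [HcA HsA]]]; [intro; apply Hz; auto|intro; apply Hz; auto|].
    destruct (lam_rename y B z) as [B' [HB [HcB HsB]]]; [intro; apply Hz; auto|intro; apply Hz; auto|].
    eapply rt_trans; [exact HA|]. eapply rt_trans; [|apply star_sym; exact HB].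
    apply star_lam. apply (IHn A' B' (ext r z)).
    + lia.
    + apply atomic_ext; auto.
    + apply inj_ext; auto.
    + rewrite HcA, HcB. auto.
  - injection Hc as Hc1 Hc2.
    eapply rt_trans; [apply star_appl|apply star_appr].
    + apply (IHn A1 B1 r); auto; lia.
    + apply (IHn A2 B2 r); auto; lia.
Qed.

Lemma inv_path v A B T : alpha'_star (App (Lam v A) B) T ->
  exists w C D, T = App (Lam w C) D /\
    (forall s r, conv (upd r v s) A = conv (upd r w s) C) /\
    (forall r, conv r B = conv r D).
Proof.
  intro H. apply clos_rt_rtn1 in H. induction H.
  - exists v, A, B. auto.
  - destruct IHclos_refl_trans_n1 as [w [C [D [-> [H1 H2]]]]].
    inversion H; subst.
    + match goal with K : alpha'_base (App _ _) _ |- _ => inversion K end.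
    + match goal with K : compat _ (Lam _ _) _ |- _ => inversion K; subst end.
      * match goal with K : alpha'_base (Lam _ _) _ |- _ => inversion K; subst end.
        eexists _, _, D. split; [reflexivity|]. split; auto.
        intros s r. rewrite H1. rewrite GRAFT.
        -- apply conv_fv. intros y Hy. simpl. unfold upd. eqbs; subst; auto; try congruence.
           all: exfalso; match goal with K0 : ~ In _ (_ :: FV _) |- _ => apply K0 end; simpl; auto.
        -- intros y Hy [E|[]]; subst.
           match goal with K0 : ~ In _ (BV _) |- _ => solve [apply K0; auto] end.
      * eexists _, _, D. split; [reflexivity|]. split; auto.
        intros s r. rewrite H1. apply alpha'_inv; auto.
    + eexists _, _, _. split; [reflexivity|]. split; auto.
      intros r. rewrite H2. apply alpha'_inv; auto.
Qed.

Lemma a'star_b''star T U : alpha'_star T U -> beta''_star T U.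
Proof.
  induction 1; [apply rt_step; right; auto|apply rt_refl|eapply rt_trans; eauto].
Qed.

Lemma a'_a T U : alpha' T U -> alpha T U.
Proof.
  induction 1.
  - destruct H as [v v' A H0 H1 H2]. apply c_base.
    replace (graft A v (Var v')) with (rep A v (Var v')).
    + constructor. intro; apply H0; simpl; auto.
    + unfold rep. apply RG; auto. intros y Hy [E|[]]; subst; contradiction.
  - apply c_appl; auto.
  - apply c_appr; auto.
  - apply c_lam; auto.
Qed.

Lemma a'star_b'star T U : alpha'_star T U -> beta'_star T U.
Proof.
  induction 1; [apply rt_step; right; apply a'_a; auto|apply rt_refl|eapply rt_trans; eauto].
Qed.

Lemma base1 T U : beta''_base T U -> beta'_star T U.
Proof.
  intros [v A B v' A' B' Hp Hcl].
  eapply rt_trans. apply a'star_b'star. exact Hp.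
  apply rt_step. left. apply c_base.
  replace (graft A' v' B') with (rep A' v' B'); [constructor|].
  unfold rep. apply RG; auto.
  destruct Hcl as [Hcl _]. intros y Hy Hy'. apply (Hcl y).
  - unfold BV. simpl. right. apply in_or_app; auto.
  - simpl. apply in_or_app; auto.
Qed.

Lemma base2 T U : beta'_base T U -> beta''_star T U.
Proof.
  intros [v A B].
  destruct (FRESHEN (App (Lam v A) B) (FV (App (Lam v A) B))) as [T' [HP [Hnd Hav]]].
  destruct (inv_path _ _ _ _ HP) as [w [C [D [-> [H1 H2]]]]].
  destruct (star_inv _ _ HP) as [_ [Hfv _]].
  assert (Hcl : clean (App (Lam w C) D)).
  { split; auto. unfold BV. intros y Hy Hy'. apply (Hav y Hy). apply Hfv; auto. }
  assert (HCD : forall y, In y (binders C) -> ~ In y (FV D)).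
  { intros y Hy Hy'. destruct Hcl as [Hc _]. apply (Hc y).
    - unfold BV; simpl; right; apply in_or_app; auto.
    - simpl; apply in_or_app; auto. }
  eapply rt_trans.
  - apply rt_step. left. apply c_base. econstructor; eauto.
  - apply a'star_b''star. apply (COMP (size (graft C w D)) _ _ DF); auto.
    + intro y; left; eauto.
    + intros a b E; injection E; auto.
    + rewrite GRAFT by auto. rewrite <- H1, <- H2. unfold rep. rewrite REP; auto.
Qed.

Theorem lemma5p8 :
  (forall A B : term, beta'' A B -> beta'_star A B) /\
  (forall A B : term, beta' A B -> beta''_star A B).
Proof.
  split; intros A B H; induction H.
  - apply base1; auto.
  - apply (ctxc_rt _ (ctxc_union _ _ (ctxc_compat _) (ctxc_compat _))); auto.
  - apply (ctxc_rt _ (ctxc_union _ _ (ctxc_compat _) (ctxc_compat _))); auto.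
  - apply (ctxc_rt _ (ctxc_union _ _ (ctxc_compat _) (ctxc_compat _))); auto.
  - apply base2; auto.
  - apply (ctxc_rt _ (ctxc_union _ _ (ctxc_compat _) (ctxc_compat _))); auto.
  - apply (ctxc_rt _ (ctxc_union _ _ (ctxc_compat _) (ctxc_compat _))); auto.
  - apply (ctxc_rt _ (ctxc_union _ _ (ctxc_compat _) (ctxc_compat _))); auto.
Qed.
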